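(* Let $y>0$ and $\mathscr{A}_n(y)=\dfrac{1}{y^2+\pi^2n^2}$, $n\in\mathbb{Z}$. Then the discrete Hilbert transform of $(\mathscr{A}_n(y))_{n\in\mathbb{Z}}$, i.e. the sequence $\frac{1}{\pi}\sum_{m\in\mathbb{Z}\setminus\{0\}}\frac{\mathscr{A}_{n-m}(y)}{m}$, is given by \[ \mathscr{B}_n(y)=\frac{\pi n\coth y}{y(y^2+\pi^2n^2)}-\frac{2\pi n}{(y^2+\pi^2n^2)^2},\qquad n\in\mathbb{Z}. \] *)

(* Defs.v *)
From Stdlib Require Import Reals ZArith.
From Coquelicot Require Import Coquelicot.
Open Scope R_scope.

Definition calA (y : R) (n : Z) : R := / (y ^ 2 + PI ^ 2 * (IZR n) ^ 2).

Definition coth (y : R) : R := cosh y / sinh y.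
Definition calB (y : R) (n : Z) : R :=
  PI * IZR n * coth y / (y * (y ^ 2 + PI ^ 2 * (IZR n) ^ 2))
  - 2 * PI * IZR n / (y ^ 2 + PI ^ 2 * (IZR n) ^ 2) ^ 2.

Definition is_sum_Zstar (f : Z -> R) (s : R) : Prop :=
  ex_series (fun k : nat => Rabs (f (Z.of_nat (S k)))) /\
  ex_series (fun k : nat => Rabs (f (- Z.of_nat (S k))%Z)) /\
  s = Series (fun k : nat => f (Z.of_nat (S k)))
      + Series (fun k : nat => f (- Z.of_nat (S k))%Z).

Definition is_discrete_hilbert (a : Z -> R) (n : Z) (h : R) : Prop :=
  exists s, is_sum_Zstar (fun m => a (n - m)%Z / IZR m) s /\ h = s / PI.

(* Main.v *)
Require Import Defs.
From Stdlib Require Import Reals ZArith Lra Lia.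
From Coquelicot Require Import Coquelicot.
Open Scope R_scope.

Fixpoint ssum (f : nat -> R) (n : nat) : R :=
  match n with O => 0 | S n' => ssum f n' + f n' end.

Lemma ssum_ext f g n : (forall i, (i < n)%nat -> f i = g i) -> ssum f n = ssum g n.
Proof. induction n; simpl; intros H; auto. rewrite IHn, H; auto; intros; apply H; lia. Qed.

Lemma ssum_plus f g n : ssum (fun i => f i + g i) n = ssum f n + ssum g n.
Proof. induction n; simpl; [ring|rewrite IHn; ring]. Qed.

Lemma ssum_minus f g n : ssum (fun i => f i - g i) n = ssum f n - ssum g n.
Proof. induction n; simpl; [ring|rewrite IHn; ring]. Qed.

Lemma ssum_scal c f n : ssum (fun i => c * f i) n = c * ssum f n.
Proof. induction n; simpl; [ring|rewrite IHn; ring]. Qed.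

Lemma ssum_zero n : ssum (fun _ => 0) n = 0.
Proof. induction n; simpl; [ring|rewrite IHn; ring]. Qed.

Lemma ssum_const c n : ssum (fun _ => c) n = INR n * c.
Proof. induction n; simpl ssum; [simpl; ring|rewrite IHn, S_INR; ring]. Qed.

Lemma ssum_swap (F : nat -> nat -> R) n m :
  ssum (fun i => ssum (F i) m) n = ssum (fun j => ssum (fun i => F i j) n) m.
Proof.
  induction n; simpl.
  - rewrite ssum_zero; auto.
  - rewrite IHn, <- ssum_plus; auto.
Qed.

Lemma ssum_first f n : ssum f (S n) = f O + ssum (fun i => f (S i)) n.
Proof. induction n; simpl in *; [ring|rewrite IHn; ring]. Qed.

Lemma ssum_split f a b : ssum f (a + b) = ssum f a + ssum (fun i => f (a + i)%nat) b.
Proof. induction b; simpl; [rewrite Nat.add_0_r; ring|rewrite Nat.add_succ_r; simpl; rewrite IHb; ring]. Qed.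

Lemma ssum_tele h n : ssum (fun i => h (S i) - h i) n = h n - h O.
Proof. induction n; simpl; [ring|rewrite IHn; ring]. Qed.

Lemma ssum_sum_n (f : nat -> R) n : sum_n f n = ssum f (S n).
Proof.
  induction n.
  - rewrite sum_O; simpl; ring.
  - unfold sum_n in *; rewrite sum_n_Sm by lia. rewrite IHn. simpl. reflexivity.
Qed.

Lemma ssum_le f g n : (forall i, (i < n)%nat -> f i <= g i) -> ssum f n <= ssum g n.
Proof. induction n; simpl; intros H; [lra|]. pose proof (H n ltac:(lia)). assert (ssum f n <= ssum g n) by (apply IHn; intros; apply H; lia). lra. Qed.

Lemma ssum_abs f n : Rabs (ssum f n) <= ssum (fun i => Rabs (f i)) n.
Proof. induction n; simpl. rewrite Rabs_R0; lra. eapply Rle_trans; [apply Rabs_triang|lra]. Qed.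

Lemma ssum_lim (u : nat -> nat -> R) (v : nat -> R) K :
  (forall i, is_lim_seq (fun M => u M i) (v i)) ->
  is_lim_seq (fun M => ssum (u M) K) (ssum v K).
Proof.
  intros H; induction K; simpl.
  - apply is_lim_seq_const.
  - apply is_lim_seq_plus'; auto.
Qed.

Lemma is_series_lim (a : nat -> R) l : is_series a l <-> is_lim_seq (fun n => ssum a n) l.
Proof.
  split; intros H.
  - assert (H1 : is_lim_seq (sum_n a) l) by exact H.
    apply is_lim_seq_incr_1.
    eapply is_lim_seq_ext; [|exact H1]. intros n; simpl. apply ssum_sum_n.
  - apply is_lim_seq_incr_1 in H.
    assert (H1 : is_lim_seq (sum_n a) l).
    { eapply is_lim_seq_ext; [|exact H]. intros n; simpl. symmetry; apply ssum_sum_n. }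
    exact H1.
Qed.

Lemma ssum_S f n : ssum f (S n) = ssum f n + f n.
Proof. reflexivity. Qed.

Lemma cos_rec x phi : cos ((x + 2) * phi) + cos (x * phi) = 2 * cos phi * cos ((x+1) * phi).
Proof.
  replace ((x+2)*phi) with ((x+1)*phi + phi) by ring.
  replace (x*phi) with ((x+1)*phi - phi) by ring.
  rewrite cos_plus, cos_minus. ring.
Qed.

Lemma geo_cos (r phi : R) (L : nat) :
  (1 - 2*r*cos phi + r^2) * ssum (fun j => r^j * cos (INR j * phi)) (S L)
  = 1 - r * cos phi - r^(S L) * cos (INR (S L) * phi) + r^(S (S L)) * cos (INR L * phi).
Proof.
  induction L.
  - simpl. replace (1*phi) with phi by ring. replace (0*phi) with 0 by ring. rewrite cos_0. ring.
  - replace (ssum (fun j => r^j * cos (INR j * phi)) (S (S L)))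
      with (ssum (fun j => r^j * cos (INR j * phi)) (S L) + r^(S L) * cos (INR (S L) * phi)) by reflexivity.
    rewrite Rmult_plus_distr_l, IHL.
    pose proof (cos_rec (INR L) phi) as C.
    rewrite !S_INR. rewrite !S_INR in *.
    replace (INR L + 1 + 1) with (INR L + 2) by ring.
    simpl pow. 
    assert (cos ((INR L + 2) * phi) = 2 * cos phi * cos ((INR L + 1) * phi) - cos (INR L * phi)) as C2 by lra.
    rewrite C2. ring.
Qed.

Lemma geo_cos_root (r phi : R) (N : nat) :
  (1 <= N)%nat -> cos (INR N * phi) = 1 -> sin (INR N * phi) = 0 ->
  (1 - 2*r*cos phi + r^2) * ssum (fun j => r^j * cos (INR j * phi)) N
  = (1 - r * cos phi) * (1 - r^N).
Proof.
  intros HN Hc Hs. destruct N as [|L]; [lia|].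
  rewrite geo_cos. rewrite Hc.
  assert (cos (INR L * phi) = cos phi) as E.
  { replace (INR L * phi) with (INR (S L) * phi - phi) by (rewrite S_INR; ring).
    rewrite cos_minus, Hc, Hs. ring. }
  rewrite E. simpl pow. ring.
Qed.

Lemma dirichlet (alpha : R) (M : nat) :
  2 * sin (alpha/2) * (1 + 2 * ssum (fun k => cos (INR (S k) * alpha)) M)
  = 2 * sin ((INR M + /2) * alpha).
Proof.
  induction M.
  - replace ((INR 0 + /2) * alpha) with (alpha/2) by (simpl; field). simpl. ring.
  - rewrite ssum_S.
    replace (2 * sin (alpha / 2) * (1 + 2 * (ssum (fun k => cos (INR (S k) * alpha)) M + cos (INR (S M) * alpha))))
      with (2 * sin (alpha / 2) * (1 + 2 * ssum (fun k => cos (INR (S k) * alpha)) M) + 4 * sin (alpha/2) * cos (INR (S M) * alpha)) by ring.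
    rewrite IHM. rewrite S_INR.
    replace ((INR M + 1 + /2) * alpha) with ((INR M + 1) * alpha + alpha/2) by field.
    replace ((INR M + /2) * alpha) with ((INR M + 1) * alpha - alpha/2) by field.
    rewrite sin_plus, sin_minus. ring.
Qed.

Lemma sin_INR_PI j : sin (INR j * PI) = 0.
Proof.
  induction j.
  - simpl. rewrite Rmult_0_l. apply sin_0.
  - rewrite S_INR. replace ((INR j + 1) * PI) with (INR j * PI + PI) by ring.
    rewrite neg_sin, IHj. ring.
Qed.

Definition symsum (M : nat) (g : R -> R) : R :=
  g 0 + ssum (fun k => g (INR (S k)) + g (- INR (S k))) M.

Lemma symsum_plus M f g : symsum M (fun x => f x + g x) = symsum M f + symsum M g.
Proof.
  unfold symsum.
  rewrite (ssum_ext _ (fun k => (f (INR (S k)) + f (- INR (S k))) + (g (INR (S k)) + g (- INR (S k))))).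
  rewrite ssum_plus. ring. intros; ring.
Qed.

Lemma symsum_scal M c g : symsum M (fun x => c * g x) = c * symsum M g.
Proof.
  unfold symsum.
  rewrite (ssum_ext _ (fun k => c * (g (INR (S k)) + g (- INR (S k))))).
  rewrite ssum_scal. ring. intros; ring.
Qed.

Lemma symsum_ext M f g : (forall x, f x = g x) -> symsum M f = symsum M g.
Proof. intros H. unfold symsum. rewrite H. f_equal. apply ssum_ext. intros; rewrite !H; auto. Qed.

Lemma symsum_ssum M (F : nat -> R -> R) L :
  symsum M (fun x => ssum (fun j => F j x) L) = ssum (fun j => symsum M (F j)) L.
Proof.
  induction L; simpl.
  - unfold symsum; simpl. rewrite (ssum_ext _ (fun _ => 0)) by (intros; ring). rewrite ssum_zero. ring.
  - rewrite symsum_plus. rewrite IHL. auto.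
Qed.

Lemma symsum_const M c : symsum M (fun _ => c) = INR (2*M+1) * c.
Proof.
  unfold symsum. rewrite ssum_const. rewrite plus_INR, mult_INR. simpl. ring.
Qed.

Lemma symsum_even M g : (forall x, g (-x) = g x) -> symsum M g = g 0 + ssum (fun k => 2 * g (INR (S k))) M.
Proof. intros H. unfold symsum. f_equal. apply ssum_ext. intros. rewrite H. ring. Qed.

Lemma ortho M j : (1 <= j <= 2*M)%nat ->
  symsum M (fun x => cos (INR j * (2 * PI * x / INR (2*M+1)))) = 0.
Proof.
  intros Hj.
  set (N := INR (2*M+1)).
  assert (HN : N = 2 * INR M + 1) by (unfold N; rewrite plus_INR, mult_INR; simpl; ring).
  assert (Npos : 0 < N) by (rewrite HN; pose proof (pos_INR M); lra).
  set (alpha := 2 * PI * INR j / N).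
  rewrite (symsum_even M).
  2:{ intros x. replace (INR j * (2 * PI * - x / N)) with (- (INR j * (2 * PI * x / N))) by (field; lra). apply cos_neg. }
  replace (INR j * (2 * PI * 0 / N)) with 0 by (field; lra). rewrite cos_0.
  rewrite (ssum_ext _ (fun k => 2 * cos (INR (S k) * alpha))).
  2:{ intros; unfold alpha. f_equal. f_equal. field. lra. }
  rewrite ssum_scal.
  assert (Hs : 0 < sin (alpha/2)).
  { apply sin_gt_0; unfold alpha.
    - apply Rmult_lt_0_compat; [|lra]. apply Rdiv_lt_0_compat; [|lra].
      pose proof PI_RGT_0. assert (0 < INR j) by (apply lt_0_INR; lia). nra.
    - assert (INR j < N) by (unfold N; apply lt_INR; lia).
      pose proof PI_RGT_0.
      apply Rmult_lt_reg_r with (2 * N); [lra|].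
      replace (2 * PI * INR j / N / 2 * (2 * N)) with (2 * PI * INR j) by (field; lra). nra. }
  pose proof (dirichlet alpha M) as D.
  replace ((INR M + /2) * alpha) with (INR j * PI) in D.
  2:{ unfold alpha. rewrite HN. field. pose proof (pos_INR M); lra. }
  rewrite sin_INR_PI in D.
  assert (1 + 2 * ssum (fun k => cos (INR (S k) * alpha)) M = 0).
  { apply Rmult_eq_reg_l with (2 * sin (alpha/2)); [|lra]. rewrite D. ring. }
  lra.
Qed.

Lemma exp_pow_INR x n : exp x ^ n = exp (INR n * x).
Proof.
  induction n.
  - simpl. rewrite Rmult_0_l, exp_0. auto.
  - rewrite S_INR. simpl pow. rewrite IHn. rewrite <- exp_plus. f_equal. ring.
Qed.

Lemma symsum_ext_P M f g :
  (forall x, cos (2*PI*x) = 1 -> sin (2*PI*x) = 0 -> f x = g x) -> symsum M f = symsum M g.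
Proof.
  intros H. unfold symsum.
  assert (Hk : forall k, cos (2*PI*INR k) = 1 /\ sin (2*PI*INR k) = 0).
  { intros k. replace (2*PI*INR k) with (0 + 2 * INR k * PI) by ring.
    rewrite cos_period, sin_period, cos_0, sin_0; auto. }
  f_equal.
  - apply H; replace (2*PI*0) with 0 by ring; [apply cos_0|apply sin_0].
  - apply ssum_ext; intros i _. destruct (Hk (S i)) as [H1 H2].
    f_equal; apply H; auto.
    + replace (2 * PI * - INR (S i)) with (- (2*PI*INR (S i))) by ring. rewrite cos_neg; auto.
    + replace (2 * PI * - INR (S i)) with (- (2*PI*INR (S i))) by ring. rewrite sin_neg, H2; ring.
Qed.

Definition NN (M : nat) : R := INR (2*M+1).

Lemma NN_eq M : NN M = 2 * INR M + 1.
Proof. unfold NN; rewrite plus_INR, mult_INR; simpl; ring. Qed.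

Lemma NN_pos M : 0 < NN M.
Proof. rewrite NN_eq; pose proof (pos_INR M); lra. Qed.

Lemma NN_ge1 M : 1 <= NN M.
Proof. rewrite NN_eq; pose proof (pos_INR M); lra. Qed.

Lemma finite_sum (M : nat) (r : R) : 0 <= r < 1 ->
  symsum M (fun x => (1 - r * cos (2*PI*x/NN M)) / (1 - 2*r*cos (2*PI*x/NN M) + r^2))
  = NN M / (1 - r^(2*M+1)).
Proof.
  intros Hr.
  assert (Hden : forall c, -1 <= c <= 1 -> 0 < 1 - 2*r*c + r^2) by (intros; nra).
  assert (HrN : r^(2*M+1) < 1).
  { assert (forall n, 0 <= r^n <= 1) as P.
    { induction n; simpl; [lra|]. nra. }
    replace (2*M+1)%nat with (S (2*M)) by lia. generalize (2*M)%nat; intros n.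
    change (r^(S n)) with (r * r^n). specialize (P n). nra. }
  pose proof (NN_pos M) as Np.
  rewrite (symsum_ext_P M _ (fun x => / (1 - r^(2*M+1)) *
        ssum (fun j => r^j * cos (INR j * (2 * PI * x / INR (2*M+1)))) (2*M+1))).
  2:{ intros x Hc Hs.
      set (phi := 2*PI*x/NN M).
      assert (E: INR (2*M+1) * phi = 2*PI*x) by (unfold phi, NN; field; fold (NN M); lra).
      pose proof (geo_cos_root r phi (2*M+1) ltac:(lia)) as G.
      rewrite E in G. specialize (G Hc Hs).
      fold (NN M). fold phi.
      pose proof (COS_bound phi). specialize (Hden (cos phi) H).
      set (S := ssum (fun j => r^j * cos (INR j * phi)) (2*M+1)) in *.
      assert (S = (1 - r * cos phi) * (1 - r^(2*M+1)) / (1 - 2*r*cos phi + r^2)) as ES.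
      { apply Rmult_eq_reg_l with (1 - 2*r*cos phi + r^2); [|lra]. rewrite G. field. lra. }
      rewrite ES. field. lra. }
  rewrite symsum_scal.
  rewrite (symsum_ssum M (fun j x => r^j * cos (INR j * (2 * PI * x / INR (2*M+1))))).
  replace (2*M+1)%nat with (S (2*M)) at 2 by lia.
  rewrite ssum_first.
  rewrite (ssum_ext _ (fun _ => 0)).
  2:{ intros i Hi. rewrite symsum_scal. rewrite ortho by lia. ring. }
  rewrite ssum_zero.
  rewrite (symsum_ext M _ (fun _ => 1)).
  2:{ intros x. simpl. rewrite Rmult_0_l, cos_0. ring. }
  rewrite symsum_const. unfold NN. field. lra.
Qed.

Definition ttN (y : R) (M : nat) (x : R) : R :=
  NN M * sinh (2*y/NN M) / (2 * ((NN M * sinh (y/NN M))^2 + (NN M * sin (PI * x / NN M))^2)).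

Lemma tt_alt y M x : 0 < y ->
  ttN y M x = / NN M * (2 * ((1 - exp (-2*y/NN M) * cos (2*PI*x/NN M)) /
     (1 - 2 * exp (-2*y/NN M) * cos (2*PI*x/NN M) + (exp (-2*y/NN M))^2)) - 1).
Proof.
  intros hy. unfold ttN.
  pose proof (NN_pos M) as Np. set (N := NN M) in *.
  set (u := y / N).
  assert (hu : 0 < u) by (unfold u; apply Rdiv_lt_0_compat; lra).
  set (E := exp u).
  assert (hE : 1 < E) by (unfold E; pose proof (exp_ineq1 u ltac:(lra)); lra).
  assert (e1 : exp (-2*y/N) = / (E*E)).
  { replace (-2*y/N) with (- (u + u)) by (unfold u; field; lra). rewrite exp_Ropp, exp_plus. auto. }
  assert (e2 : sinh (2*y/N) = (E*E - /(E*E))/2).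
  { unfold sinh. replace (2*y/N) with (u+u) by (unfold u; field; lra). rewrite exp_Ropp, exp_plus. auto. }
  assert (e3 : sinh u = (E - /E)/2).
  { unfold sinh. rewrite exp_Ropp. auto. }
  set (c := cos (2*PI*x/N)).
  assert (e4 : (N * sin (PI * x / N))^2 = N^2 * (1 - c)/2).
  { unfold c. replace (2*PI*x/N) with (2 * (PI*x/N)) by (field; lra). rewrite cos_2a_sin. field. }
  rewrite e1, e2, e4. fold u. rewrite e3.
  pose proof (COS_bound (2*PI*x/N)) as Cb. fold c in Cb.
  field.
  assert (0 < E*E - 1) by nra.
  split; [lra|split;[|split;[lra|]]].
  - assert (0 < E^2) by nra. assert (0 < (E*E - 2*c) * E^2 + 1) by nra. lra.
  - assert (0 < (N * (E * E - 1)) ^ 2) by (apply pow_lt; nra).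
    assert (0 <= N ^ 2 * (1 - c) * (E ^ 2 * 2)).
    { apply Rmult_le_pos; [apply Rmult_le_pos; [apply pow_le; lra|lra]|]. nra. }
    lra.
Qed.

Lemma coth_finite y M : 0 < y -> coth y = symsum M (ttN y M).
Proof.
  intros hy.
  pose proof (NN_pos M) as Np.
  rewrite (symsum_ext M _ _ (fun x => tt_alt y M x hy)).
  set (r := exp (-2*y/NN M)).
  assert (hr : 0 < r < 1).
  { unfold r; split; [apply exp_pos|]. rewrite <- exp_0. apply exp_increasing.
    assert (0 < 2*y/NN M) by (apply Rdiv_lt_0_compat; lra).
    replace (-2*y/NN M) with (-(2*y/NN M)) by (field; lra). lra. }
  rewrite symsum_scal.
  rewrite (symsum_ext M _ (fun x => 2 * ((1 - r * cos (2*PI*x/NN M)) /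
     (1 - 2 * r * cos (2*PI*x/NN M) + r^2)) + (-1))) by (intros; ring).
  rewrite symsum_plus, symsum_scal, symsum_const, finite_sum by lra.
  assert (rN : r^(2*M+1) = exp (-2*y)).
  { unfold r. rewrite exp_pow_INR. f_equal. fold (NN M). field. lra. }
  rewrite rN. fold (NN M).
  unfold coth, cosh, sinh.
  set (F := exp y).
  assert (hF : 1 < F) by (unfold F; pose proof (exp_ineq1 y ltac:(lra)); lra).
  assert (exp (-2*y) = /(F*F)) as e1.
  { replace (-2*y) with (-(y+y)) by ring. rewrite exp_Ropp, exp_plus; auto. }
  rewrite e1, exp_Ropp. fold F.
  field. split; [lra|split; [nra|lra]].
Qed.

Lemma deriv_seq (f : R -> R) (l c : R) :
  derivable_pt_lim f 0 l -> f 0 = 0 ->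
  is_lim_seq (fun M => NN M * f (c / NN M)) (c * l).
Proof.
  intros Hd H0.
  destruct (Req_dec c 0) as [Hc|Hc].
  - subst c. rewrite Rmult_0_l. eapply is_lim_seq_ext; [|apply (is_lim_seq_const 0)].
    intros n; simpl. unfold Rdiv. rewrite Rmult_0_l, H0. ring.
  - assert (Hq : is_lim_seq (fun M => (f (0 + c / NN M) - f 0) / (c / NN M)) l).
    { apply is_lim_seq_Reals. intros eps Heps.
      destruct (Hd eps Heps) as [d Hd'].
      destruct (INR_unbounded (Rabs c / d)) as [M0 HM0].
      exists M0. intros M HM. unfold Rdist.
      pose proof (NN_pos M) as Np.
      apply Hd'.
      + unfold Rdiv. apply Rmult_integral_contrapositive; split; auto.
        apply Rinv_neq_0_compat; lra.
      + unfold Rdiv. rewrite Rabs_mult, Rabs_inv, (Rabs_right (NN M)) by lra.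
        apply Rmult_lt_reg_r with (NN M); [lra|].
        rewrite Rmult_assoc, Rinv_l, Rmult_1_r by lra.
        pose proof (cond_pos d).
        assert (INR M0 <= INR M) by (apply le_INR; lia).
        rewrite NN_eq in *.
        assert (Rabs c < d * INR M0).
        { apply Rmult_lt_reg_r with (/d). apply Rinv_0_lt_compat; lra.
          replace (d * INR M0 * / d) with (INR M0) by (field; lra). lra. }
        pose proof (pos_INR M). nra. }
    apply is_lim_seq_scal_l with (a := c) in Hq.
    eapply is_lim_seq_ext; [|exact Hq].
    intros n; simpl. rewrite H0, Rplus_0_l. pose proof (NN_pos n). field. split; lra.
Qed.

Lemma is_lim_seq_scal' (u : nat -> R) (a l : R) : is_lim_seq u l -> is_lim_seq (fun n => a * u n) (a * l).
Proof. intros H. apply (is_lim_seq_scal_l u a l H). Qed.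

Lemma tt_lim y x : 0 < y ->
  is_lim_seq (fun M => ttN y M x) (y / (y^2 + PI^2 * x^2)).
Proof.
  intros hy.
  pose proof (deriv_seq sinh 1 (2*y) ltac:(rewrite <- cosh_0; apply derivable_pt_lim_sinh) sinh_0) as L1.
  pose proof (deriv_seq sinh 1 y ltac:(rewrite <- cosh_0; apply derivable_pt_lim_sinh) sinh_0) as L2.
  pose proof (deriv_seq sin 1 (PI*x) ltac:(rewrite <- cos_0; apply derivable_pt_lim_sin) sin_0) as L3.
  assert (L : is_lim_seq (fun M => (NN M * sinh (2*y/NN M)) /
      (2 * ((NN M * sinh (y/NN M)) * (NN M * sinh (y/NN M)) + (NN M * sin (PI*x/NN M)) * (NN M * sin (PI*x/NN M)))))
      ((2*y*1) / (2 * ((y*1)*(y*1) + (PI*x*1)*(PI*x*1))))).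
  { apply is_lim_seq_div'; auto.
    - apply is_lim_seq_scal'.
      apply is_lim_seq_plus'; apply is_lim_seq_mult'; auto.
    - assert (0 < y * 1 * (y * 1)) by nra.
      assert (0 <= PI * x * 1 * (PI * x * 1)) by nra. lra. }
  eapply is_lim_seq_ext; [|replace (y / (y ^ 2 + PI ^ 2 * x ^ 2)) with
      ((2*y*1) / (2 * ((y*1)*(y*1) + (PI*x*1)*(PI*x*1)))); [exact L|]].
  - intros n. unfold ttN. f_equal. f_equal. ring.
  - field. assert (0 < y^2) by nra. assert (0 <= PI^2 * x^2) by nra. lra.
Qed.

Lemma sinh_le v : 0 <= v -> sinh v <= v * exp v.
Proof.
  intros hv. unfold sinh.
  pose proof (exp_ineq1_le (-(2*v))).
  assert (exp (- v) = exp v * exp (-(2*v))) as E by (rewrite <- exp_plus; f_equal; ring).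
  rewrite E. pose proof (exp_pos v). nra.
Qed.

Lemma sinh_pos v : 0 < v -> 0 < sinh v.
Proof. intros; rewrite <- sinh_0; apply sinh_lt; auto. Qed.

Lemma sin_lb3 w : 0 <= w <= 2 -> w / 3 <= sin w.
Proof.
  intros hw. pose proof PI_4. pose proof (sin_bound w 0) as B.
  assert (2 <= PI). { pose proof PI2_1. lra. }
  destruct B as [B _]; [lra|lra|].
  unfold sin_approx, sin_term in B. simpl in B.
  eapply Rle_trans; [|exact B]. nra.
Qed.

Definition CC (y : R) : R := 9 * y * exp (2*y) / PI^2.

Lemma tt_nonneg y M x : 0 < y -> 0 <= ttN y M x.
Proof.
  intros hy. unfold ttN. pose proof (NN_pos M) as Np.
  assert (0 < sinh (2*y/NN M)) by (apply sinh_pos, Rdiv_lt_0_compat; lra).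
  assert (0 < sinh (y/NN M)) by (apply sinh_pos, Rdiv_lt_0_compat; lra).
  apply Rdiv_le_0_compat; [nra|].
  assert (0 < (NN M * sinh (y/NN M))^2) by (apply pow_lt; nra).
  assert (0 <= (NN M * sin (PI * x / NN M))^2) by (apply pow2_ge_0).
  lra.
Qed.

Lemma tt_bound y M k : 0 < y -> (1 <= k <= M)%nat -> ttN y M (INR k) <= CC y / (INR k)^2.
Proof.
  intros hy hk. unfold ttN, CC. pose proof (NN_pos M) as Np. pose proof (NN_ge1 M) as N1.
  pose proof PI_RGT_0 as Pp. pose proof PI_4 as P4. pose proof PI2_1 as P21.
  assert (Hk1 : 1 <= INR k) by (apply (le_INR 1); lia).
  assert (HkM : INR k <= INR M) by (apply le_INR; lia).
  set (A := NN M * sinh (2*y/NN M)).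
  set (B := NN M * sinh (y/NN M)).
  set (D := NN M * sin (PI * INR k / NN M)).
  assert (HA0 : 0 <= A).
  { unfold A. assert (0 < sinh (2*y/NN M)) by (apply sinh_pos, Rdiv_lt_0_compat; lra). nra. }
  assert (HA : A <= 2 * y * exp (2*y)).
  { unfold A. assert (0 <= 2*y/NN M) by (apply Rdiv_le_0_compat; lra).
    pose proof (sinh_le (2*y/NN M) H).
    assert (Hle : 2*y/NN M <= 2*y).
    { apply Rmult_le_reg_r with (NN M); [lra|]. unfold Rdiv. rewrite Rmult_assoc, Rinv_l by lra. nra. }
    assert (exp (2*y/NN M) <= exp (2*y)).
    { destruct Hle as [Hle|Hle]; [left; apply exp_increasing; auto|rewrite Hle; right; auto]. }
    assert (NN M * (2*y/NN M) = 2*y) by (field; lra).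
    pose proof (exp_pos (2*y/NN M)).
    apply Rle_trans with (NN M * (2 * y / NN M * exp (2 * y / NN M))).
    apply Rmult_le_compat_l; lra.
    rewrite <- Rmult_assoc, H2. apply Rmult_le_compat_l; lra. }
  assert (HD : PI * INR k / 3 <= D).
  { unfold D. set (w := PI * INR k / NN M).
    assert (0 <= w <= 2).
    { unfold w. split. apply Rdiv_le_0_compat; [nra|lra].
      apply Rmult_le_reg_r with (NN M); [lra|]. unfold Rdiv. rewrite Rmult_assoc, Rinv_l by lra.
      rewrite NN_eq. nra. }
    pose proof (sin_lb3 w H).
    replace (PI * INR k / 3) with (NN M * (w / 3)) by (unfold w; field; lra).
    apply Rmult_le_compat_l; lra. }
  assert (HD0 : 0 < PI * INR k / 3) by (apply Rdiv_lt_0_compat; nra).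
  assert (HD2 : (PI * INR k / 3)^2 <= D^2) by (apply pow_incr; lra).
  assert (0 <= B^2) by apply pow2_ge_0.
  apply Rle_trans with (A / (2 * (PI * INR k / 3)^2)).
  - unfold Rdiv. apply Rmult_le_compat_l; [lra|]. apply Rinv_le_contravar.
    + assert (0 < (PI * INR k / 3)^2) by (apply pow_lt; lra). lra.
    + lra.
  - apply Rle_trans with (2 * y * exp (2*y) / (2 * (PI * INR k / 3)^2)).
    + unfold Rdiv. apply Rmult_le_compat_r; [|lra].
      left. apply Rinv_0_lt_compat. assert (0 < (PI * INR k / 3)^2) by (apply pow_lt; lra). lra.
    + right. field. lra.
Qed.

Lemma tail_bound K d : (1 <= K)%nat ->
  ssum (fun i => / (INR (S (K + i)))^2) d <= / INR K - / INR (K + d).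
Proof.
  intros HK. induction d.
  - simpl. rewrite Nat.add_0_r. lra.
  - rewrite ssum_S. 
    assert (H1 : 1 <= INR (K + d)) by (apply (le_INR 1); lia).
    replace (INR (S (K + d))) with (INR (K+d) + 1) by (rewrite S_INR; auto).
    replace (INR (K + S d)) with (INR (K+d) + 1) by (rewrite Nat.add_succ_r, S_INR; auto).
    assert (/ (INR (K + d) + 1) ^ 2 <= / INR (K + d) - / (INR (K + d) + 1)).
    { set (n := INR (K+d)) in *. 
      replace (/ n - / (n + 1)) with (/ (n * (n+1))) by (field; lra).
      apply Rinv_le_contravar. nra. nra. }
    lra.
Qed.

Lemma ex_series_inv2 : ex_series (fun k => / (INR (S k))^2).
Proof.
  assert (Hg : Un_growing (fun n => ssum (fun k => / (INR (S k))^2) n)).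
  { intros n. rewrite ssum_S. assert (0 < / (INR (S n))^2). apply Rinv_0_lt_compat, pow_lt, lt_0_INR; lia. lra. }
  assert (Hb : has_ub (fun n => ssum (fun k => / (INR (S k))^2) n)).
  { exists 2. intros x [n ->]. destruct n. simpl; lra.
    rewrite ssum_first.
    pose proof (tail_bound 1 n ltac:(lia)) as T.
    assert (E: ssum (fun i => / INR (S (S i)) ^ 2) n = ssum (fun i => / INR (S (1 + i)) ^ 2) n) by reflexivity.
    rewrite E. assert (0 < / INR (1 + n)) by (apply Rinv_0_lt_compat, lt_0_INR; lia).
    change (INR 1) with 1 in *. replace (/ 1 ^ 2) with 1 by field. rewrite Rinv_1 in T. lra. }
  destruct (growing_cv _ Hg Hb) as [l Hl].
  exists l. apply is_series_lim. apply is_lim_seq_Reals. auto.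
Qed.

Lemma tannery (u : nat -> nat -> R) (v : nat -> R) (C : R) :
 (forall M k, (k < M)%nat -> Rabs (u M k) <= C / (INR (S k))^2) ->
 (forall k, Rabs (v k) <= C / (INR (S k))^2) ->
 (forall k, is_lim_seq (fun M => u M k) (v k)) ->
 ex_series v /\ is_lim_seq (fun M => ssum (u M) M) (Series v).
Proof.
  intros Hu Hv Hl.
  assert (HC : 0 <= C).
  { pose proof (Hv 0%nat). pose proof (Rabs_pos (v 0%nat)). simpl in H. lra. }
  assert (Ex : ex_series v).
  { apply ex_series_Rabs. apply (@ex_series_le R_AbsRing R_CompleteNormedModule) with (b := fun k => C * / (INR (S k))^2).
    - intros n. unfold norm; simpl. unfold abs; simpl. rewrite Rabs_Rabsolu. apply Hv.
    - exact (ex_series_scal_l C (fun k => / (INR (S k))^2) ex_series_inv2). }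
  split; auto.
  pose proof (Series_correct v Ex) as Hs. apply is_series_lim in Hs.
  apply is_lim_seq_Reals in Hs.
  apply is_lim_seq_Reals. intros eps Heps.
  destruct (Hs (eps/3) ltac:(lra)) as [K0 HK0].
  destruct (INR_unbounded (3 * C / eps)) as [K1 HK1].
  set (K := Nat.max (Nat.max K0 K1) 1).
  assert (HK : (1 <= K)%nat) by (unfold K; lia).
  assert (HKC : C * / INR K < eps / 3).
  { assert (INR K1 <= INR K) by (apply le_INR; unfold K; lia).
    assert (0 < INR K) by (apply lt_0_INR; lia).
    apply Rmult_lt_reg_r with (INR K); [lra|]. rewrite Rmult_assoc, Rinv_l, Rmult_1_r by lra.
    assert (3 * C / eps * eps = 3 * C) by (field; lra).
    assert (3 * C < eps * INR K) by nra. lra. }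
  pose proof (ssum_lim u v K Hl) as HL. apply is_lim_seq_Reals in HL.
  destruct (HL (eps/3) ltac:(lra)) as [M0 HM0].
  exists (Nat.max M0 K). intros M HM. unfold Rdist in *.
  specialize (HM0 M ltac:(lia)). specialize (HK0 K ltac:(unfold K; lia)).
  replace M with (K + (M - K))%nat by lia.
  rewrite ssum_split.
  replace (K + (M - K))%nat with M by lia.
  assert (Ht : Rabs (ssum (fun i => u M (K + i)%nat) (M - K)) <= C * / INR K).
  { eapply Rle_trans; [apply ssum_abs|].
    eapply Rle_trans.
    - apply ssum_le with (g := fun i => C * / (INR (S (K + i)))^2).
      intros i Hi. apply Hu. lia.
    - rewrite ssum_scal. apply Rmult_le_compat_l; auto.
      pose proof (tail_bound K (M - K) HK).
      assert (0 < / INR (K + (M - K))) by (apply Rinv_0_lt_compat, lt_0_INR; lia). lra. }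
  replace (ssum (u M) K + ssum (fun i => u M (K + i)%nat) (M - K) - Series v)
    with ((ssum (u M) K - ssum v K) + ssum (fun i => u M (K + i)%nat) (M - K) + (ssum v K - Series v)) by ring.
  eapply Rle_lt_trans; [apply Rabs_triang|].
  eapply Rle_lt_trans; [apply Rplus_le_compat_r; apply Rabs_triang|].
  lra.
Qed.

Lemma coth_series y : 0 < y ->
  is_series (fun k => / (y^2 + PI^2 * (INR (S k))^2)) ((coth y - / y) / (2*y)).
Proof.
  intros hy.
  set (v := fun k => 2 * (y / (y^2 + PI^2 * (INR (S k))^2))).
  assert (Hpos : forall x, 0 < y^2 + PI^2 * x^2).
  { intros x. assert (0 < y^2) by nra. assert (0 <= PI^2 * x^2) by (apply Rmult_le_pos; apply pow2_ge_0). lra. }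
  destruct (tannery (fun M k => 2 * ttN y M (INR (S k))) v (2 * CC y)) as [Ex Hl].
  - intros M k Hk. rewrite Rabs_right.
    + pose proof (tt_bound y M (S k) hy ltac:(lia)). unfold Rdiv in *. lra.
    + pose proof (tt_nonneg y M (INR (S k)) hy). lra.
  - intros k. unfold v. rewrite Rabs_right.
    + unfold CC. pose proof PI_RGT_0.
      assert (Hk1 : 1 <= INR (S k)) by (apply (le_INR 1); lia).
      assert (0 < PI^2 * INR (S k)^2) by (apply Rmult_lt_0_compat; apply pow_lt; lra).
      assert (1 <= exp (2*y)) by (pose proof (exp_ineq1_le (2*y)); lra).
      assert (y / (y ^ 2 + PI ^ 2 * INR (S k) ^ 2) <= y / (PI^2 * INR (S k)^2)).
      { unfold Rdiv. apply Rmult_le_compat_l; [lra|]. apply Rinv_le_contravar; auto.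
        assert (0 < y^2) by nra. lra. }
      assert (y / (PI^2 * INR (S k)^2) <= 9 * y * exp (2 * y) / PI ^ 2 / INR (S k) ^ 2).
      { replace (9 * y * exp (2 * y) / PI ^ 2 / INR (S k) ^ 2) with ((9 * exp (2*y)) * (y / (PI^2 * INR (S k)^2))).
        2:{ field. split; lra. }
        assert (0 <= y / (PI^2 * INR (S k)^2)) by (apply Rdiv_le_0_compat; lra).
        nra. }
      unfold Rdiv in *. lra.
    + specialize (Hpos (INR (S k))). assert (0 < y / (y ^ 2 + PI ^ 2 * INR (S k) ^ 2)) by (apply Rdiv_lt_0_compat; lra). lra.
  - intros k. unfold v. apply is_lim_seq_scal'. apply tt_lim; auto.
  - assert (H0 : is_lim_seq (fun M => ttN y M 0) (y / (y^2 + PI^2 * 0^2))) by (apply tt_lim; auto).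
    assert (Hc : is_lim_seq (fun M => coth y) (y / (y^2 + PI^2 * 0^2) + Series v)).
    { eapply is_lim_seq_ext; [|apply is_lim_seq_plus'; [exact H0|exact Hl]].
      intros M. simpl. rewrite (coth_finite y M hy).
      rewrite symsum_even. auto.
      intros x. unfold ttN. f_equal. f_equal. f_equal.
      replace (PI * - x / NN M) with (- (PI * x / NN M)) by (pose proof (NN_pos M); field; lra).
      rewrite sin_neg. ring. }
    apply is_lim_seq_unique in Hc. rewrite Lim_seq_const in Hc. apply (f_equal real) in Hc. simpl in Hc.
    replace (y / (y ^ 2 + PI ^ 2 * 0 ^ 2)) with (/ y) in Hc by (field; lra).
    assert (Hs : Series v = 2 * y * Series (fun k => / (y^2 + PI^2 * (INR (S k))^2))).
    { rewrite <- Series_scal_l. apply Series_ext. intros n. unfold v. unfold Rdiv. ring. }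
    assert (Ex2 : ex_series (fun k => / (y^2 + PI^2 * (INR (S k))^2))).
    { assert (E : forall n, / (2*y) * v n = / (y^2 + PI^2 * (INR (S n))^2)).
      { intros n; unfold v. field. split; [|lra]. specialize (Hpos (INR (S n))). lra. }
      apply (ex_series_ext (fun k => / (2*y) * v k)).
      intros n. apply E.
      exact (ex_series_scal_l (/ (2*y)) v Ex). }
    replace ((coth y - / y) / (2 * y)) with (Series (fun k => / (y^2 + PI^2 * (INR (S k))^2))).
    + apply Series_correct; auto.
    + rewrite Hc, Hs. field. lra.
Qed.

Lemma shift_sum (g : R -> R) (q M : nat) :
  ssum (fun k => g (INR q + INR (S k)) + g (INR q - INR (S k))) M
  = ssum (fun k => g (INR (S k)) + g (- INR (S k))) M + g 0 - g (INR q)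
    + ssum (fun j => g (INR M + INR (S j)) - g (INR j - INR M)) q.
Proof.
  induction q.
  - change (INR 0) with 0. 
    rewrite (ssum_ext (fun k => g (0 + INR (S k)) + g (0 - INR (S k))) (fun k => g (INR (S k)) + g (- INR (S k)))).
    + change (ssum (fun j => g (INR M + INR (S j)) - g (INR j - INR M)) 0) with 0. ring.
    + intros k _. rewrite Rplus_0_l. unfold Rminus. rewrite Rplus_0_l. auto.
  - rewrite ssum_S.
    set (h1 := fun k => g (INR q + 1 + INR k)).
    set (h2 := fun k => - g (INR q - INR k)).
    rewrite (ssum_ext _ (fun k => (g (INR q + INR (S k)) + g (INR q - INR (S k))) + ((h1 (S k) - h1 k) + (h2 (S k) - h2 k)))).
    2:{ intros k _. unfold h1, h2. rewrite !S_INR.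
        replace (INR q + 1 - (INR k + 1)) with (INR q - INR k) by ring.
        replace (INR q + (INR k + 1)) with (INR q + 1 + INR k) by ring. ring. }
    rewrite (ssum_plus (fun k => g (INR q + INR (S k)) + g (INR q - INR (S k)))).
    rewrite (ssum_plus (fun k => h1 (S k) - h1 k)), !ssum_tele, IHq.
    unfold h1, h2. rewrite !S_INR. change (INR 0) with 0.
    replace (INR q + 1 + INR M) with (INR M + (INR q + 1)) by ring.
    replace (INR q + 1 + 0) with (INR q + 1) by ring.
    replace (INR q - 0) with (INR q) by ring.
    ring.
Qed.

Lemma decay (g : R -> R) :
  (forall z, 1 <= Rabs z -> Rabs (g z) <= / Rabs z) ->
  forall c, is_lim_seq (fun M => g (INR M + c)) 0 /\ is_lim_seq (fun M => g (c - INR M)) 0.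
Proof.
  intros Hg c.
  assert (Main : forall (z : nat -> R), (forall M, INR M - Rabs c <= Rabs (z M)) -> is_lim_seq (fun M => g (z M)) 0).
  { intros z Hz. apply is_lim_seq_Reals. intros eps Heps.
    destruct (INR_unbounded (Rabs c + 1 + / eps)) as [M0 HM0].
    exists M0. intros M HM. unfold Rdist. rewrite Rminus_0_r.
    assert (INR M0 <= INR M) by (apply le_INR; lia).
    specialize (Hz M).
    assert (0 < / eps) by (apply Rinv_0_lt_compat; auto).
    assert (H1 : 1 <= Rabs (z M)) by lra.
    eapply Rle_lt_trans; [apply Hg; auto|].
    apply Rlt_le_trans with (/ / eps).
    - apply Rinv_lt_contravar; [nra|lra].
    - rewrite Rinv_inv; lra. }
  split; apply Main; intros M.
  - pose proof (Rabs_triang_inv (INR M) (-c)) as H0. rewrite Rabs_Ropp, (Rabs_right (INR M)) in H0 by (apply Rle_ge, pos_INR).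
    replace (INR M - - c) with (INR M + c) in H0 by ring. lra.
  - pose proof (Rabs_triang_inv (INR M) c). rewrite (Rabs_right (INR M)) in H by (apply Rle_ge, pos_INR).
    rewrite (Rabs_minus_sym c (INR M)). lra.
Qed.

Lemma shift_lim (g : R -> R) (q : nat) (G : R) :
  (forall z, 1 <= Rabs z -> Rabs (g z) <= / Rabs z) ->
  is_lim_seq (fun M => ssum (fun k => g (INR (S k)) + g (- INR (S k))) M) G ->
  is_lim_seq (fun M => ssum (fun k => g (INR q + INR (S k)) + g (INR q - INR (S k))) M) (G + g 0 - g (INR q)).
Proof.
  intros Hg HG.
  eapply is_lim_seq_ext.
  { intros M. symmetry. apply shift_sum. }
  replace (G + g 0 - g (INR q)) with (G + g 0 - g (INR q) + ssum (fun _ => 0 - 0) q).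
  2:{ rewrite (ssum_ext _ (fun _ => 0)) by (intros; ring). rewrite ssum_zero. ring. }
  apply is_lim_seq_plus'.
  - apply is_lim_seq_plus'; [apply is_lim_seq_plus'; [exact HG|apply is_lim_seq_const]|apply is_lim_seq_const].
  - apply (ssum_lim (fun M j => g (INR M + INR (S j)) - g (INR j - INR M)) (fun _ => 0 - 0) q).
    intros j. apply is_lim_seq_minus'; apply (decay g Hg).
Qed.

Definition aa (y x : R) : R := / (y^2 + PI^2 * x^2).
Definition bb (y x : R) : R := x * aa y x.

Lemma D_pos y x : 0 < y -> 0 < y^2 + PI^2 * x^2.
Proof. intros. assert (0 < y^2) by nra. assert (0 <= PI^2 * x^2) by (apply Rmult_le_pos; apply pow2_ge_0). lra. Qed.

Lemma PI_ge1 : 1 <= PI.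
Proof. pose proof PI2_1. lra. Qed.

Lemma aa_decay y : 0 < y -> forall z, 1 <= Rabs z -> Rabs (aa y z) <= / Rabs z.
Proof.
  intros hy z hz. unfold aa. pose proof (D_pos y z hy).
  rewrite Rabs_right by (left; apply Rinv_0_lt_compat; auto).
  apply Rinv_le_contravar; [lra|].
  pose proof PI_ge1. assert (z^2 = Rabs z * Rabs z) by (rewrite <- Rabs_mult; simpl; rewrite Rmult_1_r, Rabs_right; [ring|]; apply Rle_ge; nra).
  assert (0 < y^2) by nra. assert (Rabs z <= z^2) by nra.
  assert (z^2 <= PI^2 * z^2) by (assert (1 <= PI^2) by nra; nra). lra.
Qed.

Lemma bb_decay y : 0 < y -> forall z, 1 <= Rabs z -> Rabs (bb y z) <= / Rabs z.
Proof.
  intros hy z hz. unfold bb, aa. pose proof (D_pos y z hy).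
  rewrite Rabs_mult, (Rabs_right (/ _)) by (left; apply Rinv_0_lt_compat; auto).
  assert (z^2 = Rabs z * Rabs z) by (rewrite <- Rabs_mult; simpl; rewrite Rmult_1_r, Rabs_right; [ring|]; apply Rle_ge; nra).
  pose proof PI_ge1. assert (0 < y^2) by nra.
  assert (z^2 <= PI^2 * z^2) by (assert (1 <= PI^2) by nra; nra).
  replace (Rabs z * / (y ^ 2 + PI ^ 2 * z ^ 2)) with (/ ((y ^ 2 + PI ^ 2 * z ^ 2) / Rabs z)) by (field; lra).
  apply Rinv_le_contravar. lra.
  apply Rmult_le_reg_r with (Rabs z); [lra|]. unfold Rdiv. rewrite Rmult_assoc, Rinv_l by lra. lra.
Qed.

Lemma aa_part y : 0 < y ->
  is_lim_seq (fun M => ssum (fun k => aa y (INR (S k)) + aa y (- INR (S k))) M) (2 * ((coth y - / y) / (2*y))).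
Proof.
  intros hy. pose proof (coth_series y hy) as H. apply is_series_lim in H.
  apply is_lim_seq_scal' with (a := 2) in H.
  eapply is_lim_seq_ext; [|exact H].
  intros M. cbv beta. rewrite <- ssum_scal. apply ssum_ext. intros i _. unfold aa.
  replace ((- INR (S i))^2) with ((INR (S i))^2) by ring. ring.
Qed.

Lemma bb_part y :
  is_lim_seq (fun M => ssum (fun k => bb y (INR (S k)) + bb y (- INR (S k))) M) 0.
Proof.
  eapply is_lim_seq_ext; [|apply is_lim_seq_const].
  intros M. cbv beta. rewrite <- (ssum_zero M). apply ssum_ext. intros i _. unfold bb, aa.
  replace ((- INR (S i))^2) with ((INR (S i))^2) by ring. ring.
Qed.

Definition ww (y p x : R) : R := p * (aa y (p + x) + aa y (p - x)) + (bb y (p + x) + bb y (p - x)).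

Lemma ww_lim_nat y q : 0 < y ->
  is_lim_seq (fun M => ssum (fun k => ww y (INR q) (INR (S k))) M)
    (INR q * (2 * ((coth y - / y) / (2*y)) + aa y 0 - aa y (INR q)) + (0 + bb y 0 - bb y (INR q))).
Proof.
  intros hy.
  pose proof (shift_lim (aa y) q _ (aa_decay y hy) (aa_part y hy)) as A.
  pose proof (shift_lim (bb y) q _ (bb_decay y hy) (bb_part y)) as B.
  apply is_lim_seq_scal' with (a := INR q) in A.
  eapply is_lim_seq_ext; [|apply is_lim_seq_plus'; [exact A|exact B]].
  intros M. cbv beta. rewrite <- ssum_scal, <- ssum_plus. apply ssum_ext. intros; unfold ww. auto.
Qed.

Lemma ww_lim y n : 0 < y ->
  is_lim_seq (fun M => ssum (fun k => ww y (IZR n) (INR (S k))) M)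
    (IZR n * (2 * ((coth y - / y) / (2*y)) + aa y 0 - aa y (IZR n)) - bb y (IZR n)).
Proof.
  intros hy.
  destruct (Z_le_gt_dec 0 n) as [Hn|Hn].
  - rewrite <- (Z2Nat.id n Hn). rewrite <- INR_IZR_INZ.
    eapply is_lim_seq_ext; [|
      replace (INR (Z.to_nat n) * (2 * ((coth y - / y) / (2 * y)) + aa y 0 - aa y (INR (Z.to_nat n))) - bb y (INR (Z.to_nat n)))
      with (INR (Z.to_nat n) * (2 * ((coth y - / y) / (2*y)) + aa y 0 - aa y (INR (Z.to_nat n))) + (0 + bb y 0 - bb y (INR (Z.to_nat n))));
      [apply ww_lim_nat; auto|]].
    + intros; auto.
    + unfold bb. ring.
  - set (q := Z.to_nat (- n)).
    assert (En : IZR n = - INR q).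
    { unfold q. rewrite INR_IZR_INZ, Z2Nat.id by lia. rewrite opp_IZR. ring. }
    rewrite En.
    pose proof (ww_lim_nat y q hy) as W.
    apply is_lim_seq_scal' with (a := -1) in W.
    eapply is_lim_seq_ext; [|replace (- INR q * (2 * ((coth y - / y) / (2 * y)) + aa y 0 - aa y (- INR q)) - bb y (- INR q))
        with (-1 * (INR q * (2 * ((coth y - / y) / (2 * y)) + aa y 0 - aa y (INR q)) + (0 + bb y 0 - bb y (INR q)))); [exact W|]].
    + intros M. cbv beta. rewrite <- ssum_scal. apply ssum_ext. intros i _. unfold ww, bb, aa.
      replace ((- INR q + INR (S i))^2) with ((INR q - INR (S i))^2) by ring.
      replace ((- INR q - INR (S i))^2) with ((INR q + INR (S i))^2) by ring.
      ring.
    + unfold bb, aa. replace ((- INR q)^2) with ((INR q)^2) by ring. ring.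
Qed.

Lemma aa_bound y p w x : 0 < y -> 1 <= x -> x^2 <= 2 * w^2 + 2 * p^2 ->
  Rabs (aa y w / x) <= (2 / PI^2 + 2 * p^2 / y^2) / x^2.
Proof.
  intros hy hx hw. unfold aa. pose proof (D_pos y w hy) as HD. pose proof PI_ge1.
  set (K := 2 / PI^2 + 2 * p^2 / y^2).
  set (D := y ^ 2 + PI ^ 2 * w ^ 2) in *.
  assert (HK : 0 < K).
  { unfold K. assert (0 < 2 / PI^2) by (apply Rdiv_lt_0_compat; [lra|apply pow_lt; lra]).
    assert (0 <= 2 * p^2 / y^2) by (apply Rdiv_le_0_compat; [nra|apply pow_lt; lra]). lra. }
  assert (KD : 2 * w^2 + 2 * p^2 <= K * D).
  { unfold K, D.
    replace ((2 / PI ^ 2 + 2 * p ^ 2 / y ^ 2) * (y ^ 2 + PI ^ 2 * w ^ 2))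
      with (2 * y^2 / PI^2 + 2 * w^2 + 2 * p^2 + 2 * p^2 * PI^2 * w^2 / y^2) by (field; split; lra).
    assert (0 <= 2 * y^2 / PI^2) by (apply Rdiv_le_0_compat; [nra|apply pow_lt; lra]).
    assert (0 <= 2 * p^2 * PI^2 * w^2 / y^2).
    { apply Rdiv_le_0_compat; [|apply pow_lt; lra].
      assert (0 <= p^2) by apply pow2_ge_0. assert (0 <= w^2) by apply pow2_ge_0.
      assert (0 <= PI^2) by apply pow2_ge_0.
      apply Rmult_le_pos; [|auto]. apply Rmult_le_pos; [|auto]. lra. }
    lra. }
  rewrite Rabs_right.
  2:{ apply Rle_ge, Rdiv_le_0_compat; [left; apply Rinv_0_lt_compat; auto|lra]. }
  apply Rle_trans with (/ D).
  { unfold Rdiv. assert (0 < / D) by (apply Rinv_0_lt_compat; auto).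
    assert (/ x <= 1) by (rewrite <- Rinv_1; apply Rinv_le_contravar; lra). nra. }
  replace (K / x^2) with (/ (x^2 / K)) by (field; split; lra).
  apply Rinv_le_contravar. apply Rdiv_lt_0_compat; [nra|lra].
  apply Rmult_le_reg_r with K; [lra|]. unfold Rdiv. rewrite Rmult_assoc, Rinv_l by lra. lra.
Qed.

Theorem lemma3p13 (y : R) (hy : 0 < y) (n : Z) :
  is_discrete_hilbert (calA y) n (calB y n).
Proof.
  unfold is_discrete_hilbert, is_sum_Zstar.
  set (p := IZR n).
  set (f1 := fun k : nat => aa y (p - INR (S k)) / INR (S k)).
  set (f2 := fun k : nat => aa y (p + INR (S k)) / (- INR (S k))).
  assert (F1 : forall k, calA y (n - Z.of_nat (S k)) / IZR (Z.of_nat (S k)) = f1 k).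
  { intros k. unfold f1, calA, aa. rewrite minus_IZR, <- INR_IZR_INZ. auto. }
  assert (F2 : forall k, calA y (n - - Z.of_nat (S k)) / IZR (- Z.of_nat (S k)) = f2 k).
  { intros k. unfold f2, calA, aa. rewrite minus_IZR, !opp_IZR, <- INR_IZR_INZ. fold p.
    replace (p - - INR (S k)) with (p + INR (S k)) by ring. auto. }
  set (K := 2 / PI^2 + 2 * p^2 / y^2).
  assert (Hx : forall k, 1 <= INR (S k)) by (intros; apply (le_INR 1); lia).
  assert (B1 : forall k, Rabs (f1 k) <= K / (INR (S k))^2).
  { intros k. unfold f1. apply aa_bound; auto.
    set (x := INR (S k)). assert (0 <= (p - x + p)^2) by apply pow2_ge_0. nra. }
  assert (B2 : forall k, Rabs (f2 k) <= K / (INR (S k))^2).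
  { intros k. unfold f2. unfold Rdiv. rewrite Rinv_opp, <- Ropp_mult_distr_r, Rabs_Ropp.
    apply aa_bound; auto.
    set (x := INR (S k)). assert (0 <= (p + x - p)^2) by apply pow2_ge_0. assert (0 <= (p + x + p)^2) by apply pow2_ge_0. nra. }
  assert (ExK : ex_series (fun k => K * / (INR (S k))^2)).
  { exact (ex_series_scal_l K (fun k => / (INR (S k))^2) ex_series_inv2). }
  assert (E1 : ex_series (fun k => Rabs (f1 k))).
  { apply (@ex_series_le R_AbsRing R_CompleteNormedModule) with (b := fun k => K * / (INR (S k))^2); auto.
    intros k. unfold norm; simpl. unfold abs; simpl. rewrite Rabs_Rabsolu. apply B1. }
  assert (E2 : ex_series (fun k => Rabs (f2 k))).
  { apply (@ex_series_le R_AbsRing R_CompleteNormedModule) with (b := fun k => K * / (INR (S k))^2); auto.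
    intros k. unfold norm; simpl. unfold abs; simpl. rewrite Rabs_Rabsolu. apply B2. }
  exists (Series f1 + Series f2).
  split; [split; [|split]|].
  - apply (ex_series_ext (fun k => Rabs (f1 k))); auto. intros k. rewrite F1. auto.
  - apply (ex_series_ext (fun k => Rabs (f2 k))); auto. intros k. rewrite F2. auto.
  - f_equal; apply Series_ext; intros k; [rewrite F1|rewrite F2]; auto.
  - rewrite <- Series_plus by (apply ex_series_Rabs; auto).
    set (Z := (coth y - / y) / (2*y)).
    set (L := p * (2 * Z + aa y 0 - aa y p) - bb y p).
    assert (Hf : forall k, f1 k + f2 k = PI^2 * aa y p * ww y p (INR (S k))).
    { intros k. unfold f1, f2, ww, bb, aa. set (x := INR (S k)).
      pose proof (D_pos y p hy). pose proof (D_pos y (p+x) hy). pose proof (D_pos y (p-x) hy).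
      assert (1 <= x) by apply Hx. field. lra. }
    assert (HS : is_series (fun k => f1 k + f2 k) (PI^2 * aa y p * L)).
    { apply is_series_lim. pose proof (ww_lim y n hy) as W. fold p in W. fold Z in W. fold L in W.
      apply is_lim_seq_scal' with (a := PI^2 * aa y p) in W.
      eapply is_lim_seq_ext; [|exact W]. intros M. cbv beta. rewrite <- ssum_scal.
      apply ssum_ext. intros; rewrite Hf; auto. }
    rewrite (is_series_unique _ _ HS).
    unfold L, Z, calB, bb, aa. fold p.
    pose proof (D_pos y p hy). pose proof PI_RGT_0.
    field. repeat split; try lra.
Qed.
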